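(* Let $G$ be a digraph and let $r_1,r_2$ be positive integers with $r_1+r_2\ge \Delta_{max}(G)\ge 1$. If $(V_1,V_2)$ is an $(r_1,r_2)$-normal partition of $V(G)$, then $G[V_1]$ is $r_1$-special and $G[V_2]$ is $r_2$-special.
   Context: Digraphs have no loops and no parallel arcs, but may contain digons. $d_{min}(v)=\min(d^+(v),d^-(v))$, $d_{max}(v)=\max(d^+(v),d^-(v))$, $\Delta_{max}(G)=\max_v d_{max}(v)$. A digraph $H$ is $r$-special if for every vertex $v$ of $H$, either $d_{min}(v)<r$ or $d^+(v)=d^-(v)=r$ (degrees in $H$). For positive integers $r_1,r_2$, a partition $(V_1,V_2)$ of $V(G)$ is $(r_1,r_2)$-normal if it minimizes $r_2|A(G[V_1])|+r_1|A(G[V_2])|$ over all partitions of $V(G)$ into two parts, where $A(\cdot)$ denotes the arc set. *)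

(* Defs.v *)
(* A digraph on a finite vertex type T is given by its arc
   relation a : rel T; a rel has no parallel arcs, digons (a x y && a y x)
   are allowed, and loops are excluded by the hypothesis irreflexive a. *)
From mathcomp Require Import all_boot.
Set Implicit Arguments. Unset Strict Implicit. Unset Printing Implicit Defensive.

Section Digraph.
Variables (T : finType) (a : rel T).

Definition outdeg (S : {set T}) (v : T) : nat := #|[set y in S | a v y]|.
Definition indeg (S : {set T}) (v : T) : nat := #|[set y in S | a y v]|.

Definition dmin (S : {set T}) (v : T) : nat := minn (outdeg S v) (indeg S v).
Definition dmax (S : {set T}) (v : T) : nat := maxn (outdeg S v) (indeg S v).

Definition Delta_max : nat := \max_(v : T) dmax setT v.

Definition narcs (S : {set T}) : nat :=
  #|[set p : T * T | [&& p.1 \in S, p.2 \in S & a p.1 p.2]]|.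

Definition special (r : nat) (S : {set T}) : Prop :=
  forall v, v \in S -> dmin S v < r \/ (outdeg S v = r /\ indeg S v = r).

Definition normal_partition (r1 r2 : nat) (V1 V2 : {set T}) : Prop :=
  V2 = ~: V1 /\
  forall W : {set T},
    r2 * narcs V1 + r1 * narcs V2 <= r2 * narcs W + r1 * narcs (~: W).

End Digraph.

(* Main.v *)
Require Import Defs.
From mathcomp Require Import all_boot zify.

Section L.
Variables (T : finType) (a : rel T).
Hypothesis irr : irreflexive a.

Lemma cardI0 (A B : {set T * T}) : A :&: B = set0 -> #|A :|: B| = #|A| + #|B|.
Proof. by move=> h; have := cardsUI A B; rewrite h cards0 addn0. Qed.

Lemma narcsU1 (S : {set T}) v : v \notin S ->
  narcs a (v |: S) = narcs a S + outdeg a S v + indeg a S v.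
Proof.
move=> vS.
pose B := [set p : T * T | [&& p.1 == v, p.2 \in S & a p.1 p.2]].
pose C := [set p : T * T | [&& p.2 == v, p.1 \in S & a p.1 p.2]].
have eB : #|B| = outdeg a S v.
  rewrite /outdeg -(@card_imset _ _ (pair v) [set y in S | a v y] (fun y y' (h : (v, y) = (v, y')) => congr1 snd h)).
  apply: eq_card => -[x y]; rewrite !inE /=.
  apply/idP/imsetP => [/and3P[/eqP -> ys ay]|[z]]; first by exists y => //; rewrite inE ys.
  by rewrite inE => /andP[zs az] [-> ->]; rewrite eqxx zs.
have eC : #|C| = indeg a S v.
  rewrite /indeg -(@card_imset _ _ (fun y => (y, v)) [set y in S | a y v] (fun y y' (h : (y, v) = (y', v)) => congr1 fst h)).
  apply: eq_card => -[x y]; rewrite !inE /=.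
  apply/idP/imsetP => [/and3P[/eqP -> ys ay]|[z]]; first by exists x => //; rewrite inE ys.
  by rewrite inE => /andP[zs az] [-> ->]; rewrite eqxx zs.
rewrite /narcs -eB -eC -addnA -cardI0; last first.
  apply/setP => -[x y]; rewrite !inE /=.
  by case: (x =P v) => [->|_]; case: (y =P v) => [->|_] //=; rewrite ?(negbTE vS) ?andbF.
rewrite -cardI0; last first.
  apply/setP => -[x y]; rewrite !inE /=.
  case: (x =P v) => [->|_]; case: (y =P v) => [->|_] //=; rewrite ?(negbTE vS) ?andbF //=.
apply: eq_card => -[x y]; rewrite !inE /=.
by case: (x =P v) => [->|_]; case: (y =P v) => [->|_] //=; rewrite ?(negbTE vS) ?irr ?andbF ?orbF //= ?andbT.
Qed.

Lemma outdegD (S : {set T}) v : outdeg a setT v = outdeg a S v + outdeg a (~: S) v.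
Proof.
rewrite /outdeg -(cardsID S [set y in setT | a v y]); congr (_ + _); apply: eq_card => y;
by rewrite !inE andbC.
Qed.

Lemma indegD (S : {set T}) v : indeg a setT v = indeg a S v + indeg a (~: S) v.
Proof.
rewrite /indeg -(cardsID S [set y in setT | a y v]); congr (_ + _); apply: eq_card => y;
by rewrite !inE andbC.
Qed.

Lemma outdeg_le v : outdeg a setT v <= Delta_max a.
Proof. rewrite /Delta_max; apply: (leq_trans (leq_maxl _ _)); exact: (@leq_bigmax _ (fun v => dmax a setT v) v). Qed.
Lemma indeg_le v : indeg a setT v <= Delta_max a.
Proof. rewrite /Delta_max; apply: (leq_trans (leq_maxr _ _)); exact: (@leq_bigmax _ (fun v => dmax a setT v) v). Qed.

Lemma outdegD1 (S : {set T}) v : outdeg a (S :\ v) v = outdeg a S v.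
Proof. apply: eq_card => y; rewrite !inE; case: (y =P v) => [->|] //=; by rewrite irr andbF. Qed.
Lemma indegD1 (S : {set T}) v : indeg a (S :\ v) v = indeg a S v.
Proof. apply: eq_card => y; rewrite !inE; case: (y =P v) => [->|] //=; by rewrite irr andbF. Qed.

Lemma core r1 r2 (V1 : {set T}) : 0 < r1 -> Delta_max a <= r1 + r2 ->
  (forall W, r2 * narcs a V1 + r1 * narcs a (~: V1) <= r2 * narcs a W + r1 * narcs a (~: W)) ->
  special a r1 V1.
Proof.
move=> r1p hD hW v vV1.
have vS : v \notin V1 :\ v by rewrite !inE eqxx.
have e1 : V1 = v |: (V1 :\ v) by rewrite setD1K.
have vC : v \notin ~: V1 by rewrite inE vV1.
have e2 : ~: (V1 :\ v) = v |: ~: V1.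
  by apply/setP => y; rewrite !inE negb_and negbK.
have := hW (V1 :\ v); rewrite e2 {1}e1 !narcsU1 // !outdegD1 !indegD1.
have := outdeg_le v; have := indeg_le v; rewrite (outdegD V1) (indegD V1).
rewrite /dmin.
move: (outdeg a V1 v) (indeg a V1 v) (outdeg a (~: V1) v) (indeg a (~: V1) v) => o1 i1 o2 i2.
move=> h1 h2 h3.
case: (ltnP (minn o1 i1) r1) => [|hm]; first by left.
right. move: hm; rewrite leq_min => /andP[ho hi].
have : ~ (2 * r1 < o1 + i1) by move=> hs; nia.
lia.
Qed.
End L.

Theorem mainTheorem7 (T : finType) (a : rel T) (r1 r2 : nat)
    (V1 V2 : {set T}) :
  irreflexive a ->
  0 < r1 -> 0 < r2 ->
  1 <= Delta_max a -> Delta_max a <= r1 + r2 ->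
  normal_partition a r1 r2 V1 V2 ->
  special a r1 V1 /\ special a r2 V2.
Proof.
move=> irr r1p r2p _ hD [-> hW]; split.
  exact: (@core T a irr _ _ _ r1p hD hW).
have hD' : Delta_max a <= r2 + r1 by rewrite addnC.
apply: (@core T a irr r2 r1 (~: V1) r2p hD') => W.
rewrite setCK addnC [X in _ <= X]addnC.
by have := hW (~: W); rewrite setCK.
Qed.
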